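(* For all closed terms $t_0,t_1$ of $\lambda_S$, if $t_0\equiv^E_p t_1$ then $t_0\approx^p_{\emptyset}t_1$.
   Context: Terms of $\lambda_S$: $t ::= x \mid \lambda x.t \mid t\,t \mid \mathcal{S}k.t \mid \langle t\rangle$ (shift binds $k$; $\langle\cdot\rangle$ is reset), up to $\alpha$-conversion. Values $v::=\lambda x.t$. Pure contexts $E ::= \Box \mid v\,E \mid E\,t$; evaluation contexts $F ::= \Box \mid v\,F \mid F\,t \mid \langle F\rangle$. Reduction: $F[(\lambda x.t)v]\to F[t\{v/x\}]$; $F[\langle E[\mathcal Sk.t]\rangle]\to F[\langle t\{\lambda x.\langle E[x]\rangle/k\}\rangle]$ ($x\notin\mathrm{fv}(E)$); $F[\langle v\rangle]\to F[v]$; $\to^*$ reflexive-transitive closure; $t\Downarrow t'$ iff $t\to^*t'$ and $t'$ irreducible. A program is a term $\langle t\rangle$ (ranged over by $p$). Closures: for $R$ a relation on closed terms, $\widetilde R$ is the smallest relation containing $R$, all $(x,x)$, closed under all term constructors, restricted to closed terms; $\widehat R$ is the smallest relation on closed evaluation contexts with $\Box\widehat R\Box$, $v_0F_0\widehat Rv_1F_1$ if $F_0\widehat RF_1,v_0\widetilde Rv_1$; $F_0t_0\widehat RF_1t_1$ if $F_0\widehat RF_1,t_0\widetilde Rt_1$; $\langle F_0\rangle\widehat R\langle F_1\rangle$ if $F_0\widehat RF_1$. Environmental bisimilarity for programs: an environment $\mathcal E$ is a relation on closed values; an environmental relation $\mathcal X$ is a set of environments and triples $(\mathcal E,t_0,t_1)$,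 $t_0,t_1$ closed, written $t_0\mathcal X_{\mathcal E}t_1$. $\mathcal X$ is an environmental bisimulation for programs if (1) if $t_0\mathcal X_{\mathcal E}t_1$ and $t_0,t_1$ are not both programs, then for all pure $E_0\widehat{\mathcal E}E_1$, $\langle E_0[t_0]\rangle\mathcal X_{\mathcal E}\langle E_1[t_1]\rangle$; (2) if $p_0\mathcal X_{\mathcal E}p_1$: (a) $p_0\to p_0'$ (a program) implies $p_1\to^*p_1'$ (a program) with $p_0'\mathcal X_{\mathcal E}p_1'$; (b) $p_0\to v_0$ implies $p_1\to^*v_1$ and $\{(v_0,v_1)\}\cup\mathcal E\in\mathcal X$; (c) symmetric conditions for $p_1$; (3) for $\mathcal E\in\mathcal X$, $(\lambda x.t_0)\mathcal E(\lambda x.t_1)$ and $v_0\widetilde{\mathcal E}v_1$ imply $t_0\{v_0/x\}\mathcal X_{\mathcal E}t_1\{v_1/x\}$. $\approx^p$ is the largest such relation; $t_0\approx^p_{\mathcal E}t_1$ means $(\mathcal E,t_0,t_1)\in\approx^p$. Evaluation-context equivalence: for closed $t_0,t_1$, $t_0\equiv^E_pt_1$ iff for every closed evaluation context $F$, $\langle F[t_0]\rangle\Downarrow$ a value iff $\langle F[t_1]\rangle\Downarrow$ a value. *)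

(* Defs.v *)
(* Terms of lambda_S in de Bruijn notation (alpha-conversion is
   built in). Shift binds its continuation variable k as index 0. *)
From Stdlib Require Import Arith List Relations.

Inductive term : Type :=
| Var   : nat -> term
| Lam   : term -> term
| App   : term -> term -> term
| Shift : term -> term
| Reset : term -> term.

Fixpoint lift (k : nat) (t : term) : term :=
  match t with
  | Var n => if k <=? n then Var (S n) else Var n
  | Lam u => Lam (lift (S k) u)
  | App a b => App (lift k a) (lift k b)
  | Shift u => Shift (lift (S k) u)
  | Reset u => Reset (lift k u)
  end.

Fixpoint liftn (n : nat) (t : term) : term :=
  match n with 0 => t | S m => lift 0 (liftn m t) end.

Fixpoint subst (k : nat) (v t : term) : term :=
  match t with
  | Var n => if n <? k then Var n
             else if n =? k then liftn k v else Var (pred n)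
  | Lam u => Lam (subst (S k) v u)
  | App a b => App (subst k v a) (subst k v b)
  | Shift u => Shift (subst (S k) v u)
  | Reset u => Reset (subst k v u)
  end.

Definition subst0 (t v : term) : term := subst 0 v t.

Fixpoint closed_at (n : nat) (t : term) : Prop :=
  match t with
  | Var m => m < n
  | Lam u => closed_at (S n) u
  | App a b => closed_at n a /\ closed_at n b
  | Shift u => closed_at (S n) u
  | Reset u => closed_at n u
  end.

Definition closed (t : term) : Prop := closed_at 0 t.

Definition is_value (t : term) : Prop := exists u, t = Lam u.

Definition is_program (t : term) : Prop := exists u, t = Reset u.

Inductive ctx : Type :=
| Hole   : ctx
| CAppR  : term -> ctx -> ctx
| CAppL  : ctx -> term -> ctx
| CReset : ctx -> ctx.

Fixpoint plug (c : ctx) (t : term) : term :=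
  match c with
  | Hole => t
  | CAppR v c' => App v (plug c' t)
  | CAppL c' u => App (plug c' t) u
  | CReset c' => Reset (plug c' t)
  end.

Fixpoint ctx_lift (k : nat) (c : ctx) : ctx :=
  match c with
  | Hole => Hole
  | CAppR v c' => CAppR (lift k v) (ctx_lift k c')
  | CAppL c' u => CAppL (ctx_lift k c') (lift k u)
  | CReset c' => CReset (ctx_lift k c')
  end.

Fixpoint eval_ctx (c : ctx) : Prop :=
  match c with
  | Hole => True
  | CAppR v c' => is_value v /\ eval_ctx c'
  | CAppL c' _ => eval_ctx c'
  | CReset c' => eval_ctx c'
  end.

Fixpoint pure_ctx (c : ctx) : Prop :=
  match c with
  | Hole => True
  | CAppR v c' => is_value v /\ pure_ctx c'
  | CAppL c' _ => pure_ctx c'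
  | CReset _ => False
  end.

Fixpoint ctx_closed (c : ctx) : Prop :=
  match c with
  | Hole => True
  | CAppR v c' => closed v /\ ctx_closed c'
  | CAppL c' u => ctx_closed c' /\ closed u
  | CReset c' => ctx_closed c'
  end.

Inductive step : term -> term -> Prop :=
| step_beta : forall F t v,
    eval_ctx F -> is_value v ->
    step (plug F (App (Lam t) v)) (plug F (subst0 t v))
| step_shift : forall F E t,
    eval_ctx F -> pure_ctx E ->
    step (plug F (Reset (plug E (Shift t))))
         (plug F (Reset (subst0 t (Lam (Reset (plug (ctx_lift 0 E) (Var 0)))))))
| step_reset : forall F v,
    eval_ctx F -> is_value v ->
    step (plug F (Reset v)) (plug F v).

Definition steps : term -> term -> Prop := clos_refl_trans term step.

Definition irreducible (t : term) : Prop := forall t', ~ step t t'.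

Definition evals_to_value (t : term) : Prop :=
  exists v, is_value v /\ steps t v /\ irreducible v.

Definition ctx_equiv (t0 t1 : term) : Prop :=
  forall F, eval_ctx F -> ctx_closed F ->
    (evals_to_value (Reset (plug F t0)) <-> evals_to_value (Reset (plug F t1))).

Definition rel := term -> term -> Prop.

Inductive tilde_open (R : rel) : rel :=
| tl_base  : forall a b, R a b -> tilde_open R a b
| tl_var   : forall n, tilde_open R (Var n) (Var n)
| tl_lam   : forall a b, tilde_open R a b -> tilde_open R (Lam a) (Lam b)
| tl_app   : forall a a' b b', tilde_open R a b -> tilde_open R a' b' ->
               tilde_open R (App a a') (App b b')
| tl_shift : forall a b, tilde_open R a b -> tilde_open R (Shift a) (Shift b)
| tl_reset : forall a b, tilde_open R a b -> tilde_open R (Reset a) (Reset b).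

Definition tilde (R : rel) : rel :=
  fun a b => tilde_open R a b /\ closed a /\ closed b.

Inductive hat (R : rel) : ctx -> ctx -> Prop :=
| hat_hole  : hat R Hole Hole
| hat_appr  : forall v0 v1 F0 F1, is_value v0 -> is_value v1 ->
    hat R F0 F1 -> tilde R v0 v1 -> hat R (CAppR v0 F0) (CAppR v1 F1)
| hat_appl  : forall F0 F1 t0 t1,
    hat R F0 F1 -> tilde R t0 t1 -> hat R (CAppL F0 t0) (CAppL F1 t1)
| hat_reset : forall F0 F1, hat R F0 F1 -> hat R (CReset F0) (CReset F1).

Definition is_env (E : rel) : Prop :=
  forall v0 v1, E v0 v1 -> is_value v0 /\ is_value v1 /\ closed v0 /\ closed v1.

(* environmental relation: a set of environments and a set of triples *)
Record env_rel : Type := {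
  X_env : rel -> Prop;
  X_tri : rel -> term -> term -> Prop
}.

Definition env_rel_wf (X : env_rel) : Prop :=
  (forall E, X_env X E -> is_env E) /\
  (forall E t0 t1, X_tri X E t0 t1 -> is_env E /\ closed t0 /\ closed t1).

Definition add_pair (v0 v1 : term) (E : rel) : rel :=
  fun a b => (a = v0 /\ b = v1) \/ E a b.

Definition env_bisim_p (X : env_rel) : Prop :=
  env_rel_wf X /\
  (forall E t0 t1, X_tri X E t0 t1 -> ~ (is_program t0 /\ is_program t1) ->
     forall E0 E1, pure_ctx E0 -> pure_ctx E1 -> hat E E0 E1 ->
       X_tri X E (Reset (plug E0 t0)) (Reset (plug E1 t1))) /\
  (forall E p0 p1, X_tri X E p0 p1 -> is_program p0 -> is_program p1 ->
     (forall p0', step p0 p0' -> is_program p0' ->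
        exists p1', steps p1 p1' /\ is_program p1' /\ X_tri X E p0' p1') /\
     (forall v0, step p0 v0 -> is_value v0 ->
        exists v1, steps p1 v1 /\ is_value v1 /\ X_env X (add_pair v0 v1 E)) /\
     (forall p1', step p1 p1' -> is_program p1' ->
        exists p0', steps p0 p0' /\ is_program p0' /\ X_tri X E p0' p1') /\
     (forall v1, step p1 v1 -> is_value v1 ->
        exists v0, steps p0 v0 /\ is_value v0 /\ X_env X (add_pair v0 v1 E))) /\
  (forall E, X_env X E -> forall t0 t1 v0 v1,
     E (Lam t0) (Lam t1) -> is_value v0 -> is_value v1 -> tilde E v0 v1 ->
     X_tri X E (subst0 t0 v0) (subst0 t1 v1)).

Definition bisimilar_p (E : rel) (t0 t1 : term) : Prop :=
  exists X, env_bisim_p X /\ X_tri X E t0 t1.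

Definition empty_rel : rel := fun _ _ => False.

(* Main.v *)
Require Import Defs.
From Stdlib Require Import Arith List Relations Lia.

Lemma closed_mono : forall c j m, closed_at j c -> j <= m -> closed_at m c.
Proof.
  induction c; simpl; intros j m H Hle.
  - lia.
  - eapply IHc; eauto; lia.
  - destruct H; split; eauto.
  - eapply IHc; eauto; lia.
  - eauto.
Qed.

Lemma lift_closed : forall c j k, closed_at j c -> j <= k -> lift k c = c.
Proof.
  induction c; simpl; intros j k H Hle.
  - destruct (Nat.leb_spec k n); [lia|reflexivity].
  - f_equal; apply IHc with (S j); auto; lia.
  - destruct H; f_equal; eauto.
  - f_equal; apply IHc with (S j); auto; lia.
  - f_equal; eauto.
Qed.

Lemma liftn_closed : forall n c, closed c -> liftn n c = c.
Proof.
  induction n; simpl; intros; auto. rewrite IHn; auto. apply lift_closed with 0; auto.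
Qed.

Lemma subst_closed : forall c j k v, closed_at j c -> j <= k -> subst k v c = c.
Proof.
  induction c; simpl; intros j k v H Hle.
  - destruct (Nat.ltb_spec n k); [reflexivity|lia].
  - f_equal; apply IHc with (S j); auto; lia.
  - destruct H; f_equal; eauto.
  - f_equal; apply IHc with (S j); auto; lia.
  - f_equal; eauto.
Qed.

Lemma subst_closed_at : forall t m k v, closed v -> closed_at (S m) t -> k <= m ->
  closed_at m (subst k v t).
Proof.
  induction t; simpl; intros m k v Hv H Hle.
  - destruct (Nat.ltb_spec n k). simpl; lia.
    destruct (Nat.eqb_spec n k). rewrite liftn_closed; auto. apply closed_mono with 0; auto; lia.
    simpl; lia.
  - apply IHt; auto; lia.
  - destruct H; split; eauto.
  - apply IHt; auto; lia.
  - eauto.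
Qed.

Fixpoint ccomp (F G : ctx) : ctx :=
  match F with
  | Hole => G
  | CAppR v F' => CAppR v (ccomp F' G)
  | CAppL F' u => CAppL (ccomp F' G) u
  | CReset F' => CReset (ccomp F' G)
  end.

Lemma plug_ccomp : forall F G x, plug (ccomp F G) x = plug F (plug G x).
Proof. induction F; simpl; intros; auto; rewrite IHF; auto. Qed.

Lemma eval_ccomp : forall F G, eval_ctx F -> eval_ctx G -> eval_ctx (ccomp F G).
Proof. induction F; simpl; intros G H1 H2; auto; intuition. Qed.

Inductive contr : term -> term -> Prop :=
| c_beta : forall t v, is_value v -> contr (App (Lam t) v) (subst0 t v)
| c_shift : forall E t, pure_ctx E -> contr (Reset (plug E (Shift t)))
    (Reset (subst0 t (Lam (Reset (plug (ctx_lift 0 E) (Var 0))))))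
| c_reset : forall v, is_value v -> contr (Reset v) v.

Lemma step_contr : forall a b, step a b -> exists F r r', eval_ctx F /\ contr r r' /\
  a = plug F r /\ b = plug F r'.
Proof.
  intros a b H; destruct H; do 3 eexists; repeat split; eauto; constructor; auto.
Qed.

Lemma contr_step : forall F r r', eval_ctx F -> contr r r' -> step (plug F r) (plug F r').
Proof. intros F r r' HF H; destruct H; constructor; auto. Qed.

Lemma step_ctx : forall a b G, step a b -> eval_ctx G -> step (plug G a) (plug G b).
Proof.
  intros a b G H HG. apply step_contr in H as (F&r&r'&HF&Hc&->&->).
  rewrite <- !plug_ccomp. apply contr_step; auto. apply eval_ccomp; auto.
Qed.

Lemma steps_ctx : forall a b G, steps a b -> eval_ctx G -> steps (plug G a) (plug G b).
Proof.
  intros a b G H HG. induction H.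
  - apply rt_step, step_ctx; auto.
  - apply rt_refl.
  - eapply rt_trans; eauto.
Qed.

Lemma plug_not_lam : forall F r r' u, contr r r' -> plug F r <> Lam u.
Proof. intros F r r' u H; destruct F; simpl; try discriminate; destruct H; discriminate. Qed.

Lemma shift_not_lam : forall E t u, plug E (Shift t) <> Lam u.
Proof. intros; destruct E; discriminate. Qed.

Lemma shift_not_reset : forall E t q, pure_ctx E -> plug E (Shift t) <> Reset q.
Proof. intros; destruct E; simpl in *; try discriminate; contradiction. Qed.

Lemma NS : forall E t F r r', pure_ctx E -> eval_ctx F -> contr r r' ->
  plug E (Shift t) <> plug F r.
Proof.
  induction E; intros t0 F r r' HE HF Hc Heq; destruct F; simpl in *;
    try discriminate; try contradiction.
  - subst r; inversion Hc.
  - subst r. inversion Hc; subst. match goal with H : is_value _ |- _ => destruct H as [u Hu] end. eapply shift_not_lam; eauto.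
  - injection Heq; intros. destruct HE, HF. eapply IHE; eauto.
  - injection Heq; intros. destruct HE as [[w Hw] _]. subst. eapply plug_not_lam; eauto.
  - subst r. inversion Hc; subst. eapply shift_not_lam; eauto.
  - injection Heq; intros. destruct HF as [[w Hw] _]. subst. eapply shift_not_lam; eauto.
  - injection Heq; intros. eapply IHE; eauto.
Qed.

Lemma HC : forall F r r' q q', eval_ctx F -> contr r r' -> contr q q' -> r = plug F q -> F = Hole.
Proof.
  intros F r r' q q' HF Hr Hq Heq. destruct F; auto; simpl in *; exfalso; subst r.
  - inversion Hr; subst. match goal with Hx : is_value _ |- _ => destruct Hx as [u Hu] end. eapply plug_not_lam; eauto.
  - inversion Hr; subst. eapply plug_not_lam; eauto.
  - inversion Hr; subst.
    + eapply NS; eauto.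
    + match goal with Hx : is_value _ |- _ => destruct Hx as [u Hu] end. eapply plug_not_lam; eauto.
Qed.

Lemma UD : forall F F' r r' q q', eval_ctx F -> eval_ctx F' -> contr r r' -> contr q q' ->
  plug F r = plug F' q -> F = F' /\ r = q.
Proof.
  induction F; intros F' r r' q q' HF HF' Hr Hq Heq; simpl in *.
  - assert (F' = Hole) by (eapply (HC F' r r' q q'); eauto). subst. simpl in *. split; auto.
  - destruct F'; simpl in *.
    + assert (CAppR t F = Hole) by (eapply (HC _ q q' r r'); eauto). discriminate.
    + injection Heq; intros. destruct HF, HF'. destruct (IHF F' r r' q q') as [-> ->]; auto; subst; split; auto.
    + injection Heq; intros. destruct HF as [[w Hw] _]. subst. exfalso; eapply plug_not_lam; eauto.
    + discriminate.
  - destruct F'; simpl in *.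
    + assert (CAppL F t = Hole) by (eapply (HC _ q q' r r'); eauto). discriminate.
    + injection Heq; intros. destruct HF' as [[w Hw] _]. subst. exfalso; eapply (plug_not_lam F r r'); eauto.
    + injection Heq; intros. destruct (IHF F' r r' q q') as [-> ->]; auto; subst; split; auto.
    + discriminate.
  - destruct F'; simpl in *.
    + assert (CReset F = Hole) by (eapply (HC _ q q' r r'); eauto). discriminate.
    + discriminate.
    + discriminate.
    + injection Heq; intros. destruct (IHF F' r r' q q') as [-> ->]; auto; subst; split; auto.
Qed.

Lemma PS : forall E E' t t', pure_ctx E -> pure_ctx E' -> plug E (Shift t) = plug E' (Shift t') ->
  E = E' /\ t = t'.
Proof.
  induction E; destruct E'; simpl; intros t1 t2 H1 H2 Heq; try discriminate; try contradiction.
  - injection Heq; auto.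
  - injection Heq; intros. destruct H1, H2. edestruct IHE; eauto. subst; auto.
  - injection Heq; intros. destruct H1 as [[w Hw] _]. subst. exfalso; eapply shift_not_lam; eauto.
  - injection Heq; intros. destruct H2 as [[w Hw] _]. subst. exfalso; eapply shift_not_lam; eauto.
  - injection Heq; intros. edestruct IHE; eauto. subst; auto.
Qed.

Lemma contr_det : forall r a b, contr r a -> contr r b -> a = b.
Proof.
  intros r a b Ha Hb. destruct Ha; inversion Hb; subst; auto.
  - destruct (PS E0 E t0 t) as [-> ->]; auto.
  - match goal with Hx : is_value _ |- _ => destruct Hx as [w Hw] end. exfalso; eapply shift_not_lam; eauto.
  - match goal with Hx : is_value _ |- _ => destruct Hx as [w Hw] end. exfalso; eapply shift_not_lam; eauto.
Qed.

Lemma step_det : forall a b c, step a b -> step a c -> b = c.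
Proof.
  intros a b c H1 H2.
  apply step_contr in H1 as (F&r&r'&HF&Hc&->&->).
  apply step_contr in H2 as (F'&q&q'&HF'&Hc'&Heq&->).
  destruct (UD F F' r r' q q') as [-> ->]; auto.
  rewrite (contr_det _ _ _ Hc Hc'); auto.
Qed.

Lemma value_irred : forall v, is_value v -> irreducible v.
Proof.
  intros v [u ->] t' H. apply step_contr in H as (F&r&r'&HF&Hc&Heq&_).
  eapply plug_not_lam; eauto.
Qed.

Lemma ev_step : forall a b, step a b -> (evals_to_value a <-> evals_to_value b).
Proof.
  intros a b H; split.
  - intros (v&Hv&Hs&Hi). apply clos_rt_rt1n in Hs. inversion Hs; subst.
    + exfalso; eapply Hi; eauto.
    + rewrite (step_det _ _ _ H H0). exists v; repeat split; auto. apply clos_rt1n_rt; auto.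
  - intros (v&Hv&Hs&Hi). exists v; repeat split; auto. eapply rt_trans; [apply rt_step|]; eauto.
Qed.

Lemma ev_steps : forall a b, steps a b -> (evals_to_value a <-> evals_to_value b).
Proof.
  intros a b H; induction H.
  - apply ev_step; auto.
  - tauto.
  - tauto.
Qed.

Lemma plug_closed_inv : forall F x, closed (plug F x) -> closed x.
Proof. unfold closed; induction F; simpl; intros; intuition eauto. Qed.

Lemma plug_closed_repl : forall F x y, closed (plug F x) -> closed y -> closed (plug F y).
Proof. unfold closed; induction F; simpl; intros; intuition eauto. Qed.

Lemma plug_closed : forall F x, ctx_closed F -> closed x -> closed (plug F x).
Proof. unfold closed; induction F; simpl; intros; unfold closed in *; intuition eauto. Qed.

Lemma ctx_lift_closed : forall E x y, closed_at 0 (plug E x) -> closed_at 1 y ->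
  closed_at 1 (plug (ctx_lift 0 E) y).
Proof.
  induction E; simpl; intros x y H1 H2; auto.
  - destruct H1. rewrite lift_closed with (j := 0); auto. split; eauto.
    apply closed_mono with 0; auto.
  - destruct H1. rewrite (lift_closed t 0 0); auto. split; eauto.
    apply closed_mono with 0; auto.
  - eauto.
Qed.

Lemma contr_closed : forall r r', contr r r' -> closed r -> closed r'.
Proof.
  unfold closed; intros r r' H Hc; destruct H; simpl in *.
  - destruct Hc. apply subst_closed_at; auto.
  - apply subst_closed_at; auto.
    + unfold closed; simpl. eapply ctx_lift_closed; eauto. simpl; lia.
    + apply (plug_closed_inv E (Shift t)); auto.
  - auto.
Qed.

Lemma step_closed : forall a b, step a b -> closed a -> closed b.
Proof.
  intros a b H Hc. apply step_contr in H as (F&r&r'&HF&Hr&->&->).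
  eapply plug_closed_repl; eauto. eapply contr_closed; eauto. eapply plug_closed_inv; eauto.
Qed.

Lemma steps_closed : forall a b, steps a b -> closed a -> closed b.
Proof. intros a b H; induction H; eauto using step_closed. Qed.

Lemma reset_prog_step : forall q y, step (Reset (Reset q)) y ->
  exists p', y = Reset p' /\ step (Reset q) p'.
Proof.
  intros q y H. apply step_contr in H as (F&r&r'&HF&Hr&Heq&->).
  destruct F; simpl in *; try discriminate.
  - subst r. inversion Hr; subst.
    + exfalso; eapply shift_not_reset; eauto.
    + match goal with Hx : is_value _ |- _ => destruct Hx as [w Hw] end. discriminate.
  - injection Heq; intros Heq'. exists (plug F r'); split; auto.
    rewrite Heq'. apply contr_step; auto.
Qed.

Lemma prog_step_shape : forall q y, step (Reset q) y -> is_program y \/ is_value y.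
Proof.
  intros q y H. apply step_contr in H as (F&r&r'&HF&Hr&Heq&->).
  destruct F; simpl in *; try discriminate.
  - subst r. inversion Hr; subst.
    + left; eexists; eauto.
    + right; auto.
  - left; eexists; eauto.
Qed.

Lemma reset_eval_inv : forall x w, clos_refl_trans_1n _ step x w -> is_value w ->
  forall p, x = Reset p -> is_program p \/ is_value p -> exists v, is_value v /\ steps p v.
Proof.
  intros x w H; induction H; intros Hw p Hx Hp; subst.
  - destruct Hw; discriminate.
  - destruct Hp as [[q ->]|Hv].
    + destruct (reset_prog_step _ _ H) as (p'&->&Hs).
      destruct (IHclos_refl_trans_1n Hw p' eq_refl) as (v&Hv&Hs'); auto.
      { eapply prog_step_shape; eauto. }
      exists v; split; auto. eapply rt_trans; [apply rt_step|]; eauto.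
    + exists p; split; auto. apply rt_refl.
Qed.

Lemma hat_eval : forall E F0 F1, hat E F0 F1 -> eval_ctx F0 /\ eval_ctx F1.
Proof. intros R F0 F1 H; induction H; simpl; tauto. Qed.

Lemma hat_ctx_closed : forall E F0 F1, hat E F0 F1 -> ctx_closed F0 /\ ctx_closed F1.
Proof. intros R F0 F1 H; induction H; simpl; unfold tilde in *; tauto. Qed.

Lemma hat_plug : forall E F0 F1 s0 s1, hat E F0 F1 -> tilde E s0 s1 ->
  tilde E (plug F0 s0) (plug F1 s1).
Proof.
  intros R F0 F1 s0 s1 H; induction H; simpl; intros Hs; auto.
  - destruct (IHhat Hs) as (Ho&Hc0&Hc1). destruct H2 as (Ho'&Hc0'&Hc1').
    split; [apply tl_app; auto|]. unfold closed in *; simpl; tauto.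
  - destruct (IHhat Hs) as (Ho&Hc0&Hc1). destruct H0 as (Ho'&Hc0'&Hc1').
    split; [apply tl_app; auto|]. unfold closed in *; simpl; tauto.
  - destruct (IHhat Hs) as (Ho&Hc0&Hc1).
    split; [apply tl_reset; auto|]. unfold closed in *; simpl; tauto.
Qed.

Lemma hat_comp : forall E F0 F1 G0 G1, hat E F0 F1 -> hat E G0 G1 ->
  hat E (ccomp F0 G0) (ccomp F1 G1).
Proof. intros R F0 F1 G0 G1 H; induction H; simpl; intros; try constructor; auto. Qed.

Lemma tilde_empty : forall a b, tilde_open empty_rel a b -> a = b.
Proof. intros a b H; induction H; subst; auto; contradiction. Qed.

Lemma hat_empty : forall F0 F1, hat empty_rel F0 F1 -> F0 = F1.
Proof.
  intros F0 F1 H; induction H; subst; auto.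
  - destruct H2 as [H2 _]. apply tilde_empty in H2; subst; auto.
  - destruct H0 as [H0 _]. apply tilde_empty in H0; subst; auto.
Qed.

Lemma subst_var_lt : forall k v n, n < k -> subst k v (Var n) = Var n.
Proof. intros; simpl; destruct (Nat.ltb_spec n k); [auto|lia]. Qed.

Lemma subst_var_gt : forall k v n, k < n -> subst k v (Var n) = Var (pred n).
Proof. intros; simpl; destruct (Nat.ltb_spec n k); [lia|]. destruct (Nat.eqb_spec n k); [lia|auto]. Qed.

Lemma abs : forall v0 v1 E a b, tilde_open (add_pair v0 v1 E) a b -> closed v0 -> closed v1 ->
  is_env E -> forall k m, k <= m -> closed_at m a -> closed_at m b ->
  exists a' b', tilde_open E a' b' /\ subst k v0 a' = a /\ subst k v1 b' = b /\
    closed_at (S m) a' /\ closed_at (S m) b'.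
Proof.
  intros v0 v1 E a b H; induction H; intros Hv0 Hv1 HE k m Hk Ha Hb.
  - destruct H as [[-> ->]|H].
    + exists (Var k), (Var k). simpl. rewrite Nat.ltb_irrefl, Nat.eqb_refl, !liftn_closed; auto.
      repeat split; auto; try apply tl_var; simpl; lia.
    + destruct (HE _ _ H) as (_&_&Hc0&Hc1). exists a, b.
      rewrite (subst_closed a 0), (subst_closed b 0); auto; try lia.
      repeat split; auto; try (apply tl_base; auto); apply closed_mono with 0; auto; lia.
  - simpl in Ha. destruct (Nat.ltb_spec n k).
    + exists (Var n), (Var n). rewrite !subst_var_lt by lia.
      repeat split; auto; try apply tl_var; simpl; lia.
    + exists (Var (S n)), (Var (S n)). rewrite !subst_var_gt by lia.
      repeat split; auto; try apply tl_var; simpl; lia.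
  - simpl in Ha, Hb.
    destruct (IHtilde_open Hv0 Hv1 HE (S k) (S m)) as (a'&b'&Ho&Ea&Eb&Ca&Cb); auto; try lia.
    exists (Lam a'), (Lam b'). simpl; rewrite Ea, Eb. repeat split; auto; apply tl_lam; auto.
  - simpl in Ha, Hb. destruct Ha, Hb.
    destruct (IHtilde_open1 Hv0 Hv1 HE k m) as (a1&b1&Ho&Ea&Eb&Ca&Cb); auto.
    destruct (IHtilde_open2 Hv0 Hv1 HE k m) as (a2&b2&Ho'&Ea'&Eb'&Ca'&Cb'); auto.
    exists (App a1 a2), (App b1 b2). simpl; rewrite Ea, Eb, Ea', Eb'.
    repeat split; auto; apply tl_app; auto.
  - simpl in Ha, Hb.
    destruct (IHtilde_open Hv0 Hv1 HE (S k) (S m)) as (a'&b'&Ho&Ea&Eb&Ca&Cb); auto; try lia.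
    exists (Shift a'), (Shift b'). simpl; rewrite Ea, Eb. repeat split; auto; apply tl_shift; auto.
  - simpl in Ha, Hb.
    destruct (IHtilde_open Hv0 Hv1 HE k m) as (a'&b'&Ho&Ea&Eb&Ca&Cb); auto; try lia.
    exists (Reset a'), (Reset b'). simpl; rewrite Ea, Eb. repeat split; auto; apply tl_reset; auto.
Qed.

Definition Sound (E : rel) : Prop :=
  forall s0 s1, tilde E s0 s1 -> (evals_to_value (Reset s0) <-> evals_to_value (Reset s1)).

Definition XT (E : rel) (t0 t1 : term) : Prop :=
  is_env E /\ closed t0 /\ closed t1 /\
  forall F0 F1, hat E F0 F1 ->
    (evals_to_value (Reset (plug F0 t0)) <-> evals_to_value (Reset (plug F1 t1))).

Definition XE (E : rel) : Prop := is_env E /\ Sound E.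

Definition XX : env_rel := {| X_env := XE; X_tri := XT |}.

Lemma beta_ev : forall F s v, eval_ctx F -> is_value v ->
  (evals_to_value (Reset (plug F (App (Lam s) v))) <-> evals_to_value (Reset (plug F (subst0 s v)))).
Proof.
  intros F s v HF Hv. apply ev_step. apply (step_beta (CReset F)); simpl; auto.
Qed.

Lemma sound_add : forall E p0 p1 v0 v1, XT E p0 p1 -> steps p0 v0 -> steps p1 v1 ->
  is_value v0 -> is_value v1 -> closed v0 -> closed v1 -> Sound (add_pair v0 v1 E).
Proof.
  intros E p0 p1 v0 v1 (HE&Hp0&Hp1&HF) Hs0 Hs1 Hv0 Hv1 Hc0 Hc1 s0 s1 (Ho&Hcs0&Hcs1).
  destruct (abs v0 v1 E s0 s1 Ho Hc0 Hc1 HE 0 0) as (a&b&Hab&Ea&Eb&Ca&Cb); auto.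
  assert (K0 : evals_to_value (Reset s0) <-> evals_to_value (Reset (App (Lam a) p0))).
  { rewrite <- Ea. fold (subst0 a v0).
    rewrite <- (beta_ev Hole a v0); simpl; auto.
    symmetry. apply ev_steps. apply (steps_ctx _ _ (CReset (CAppR (Lam a) Hole))); auto.
    simpl; split; auto. eexists; eauto. }
  assert (K1 : evals_to_value (Reset s1) <-> evals_to_value (Reset (App (Lam b) p1))).
  { rewrite <- Eb. fold (subst0 b v1).
    rewrite <- (beta_ev Hole b v1); simpl; auto.
    symmetry. apply ev_steps. apply (steps_ctx _ _ (CReset (CAppR (Lam b) Hole))); auto.
    simpl; split; auto. eexists; eauto. }
  rewrite K0, K1.
  apply (HF (CAppR (Lam a) Hole) (CAppR (Lam b) Hole)).
  apply hat_appr; [eexists; eauto|eexists; eauto|apply hat_hole|].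
  split; [apply tl_lam; auto|]. unfold closed; simpl; auto.
Qed.

Lemma prog_ev : forall p v, step p v -> is_value v -> evals_to_value (Reset p).
Proof.
  intros p v H Hv. exists v; repeat split; auto.
  - eapply rt_trans; [apply rt_step; apply (step_ctx p v (CReset Hole)); simpl; eauto|].
    apply rt_step. apply (step_reset Hole); simpl; auto.
  - apply value_irred; auto.
Qed.

Lemma get_value : forall p, is_program p -> evals_to_value (Reset p) ->
  exists v, is_value v /\ steps p v.
Proof.
  intros p Hp (w&Hw&Hs&_). apply clos_rt_rt1n in Hs.
  eapply reset_eval_inv; eauto.
Qed.

Theorem lemma17 : forall t0 t1 : term,
  closed t0 -> closed t1 -> ctx_equiv t0 t1 -> bisimilar_p empty_rel t0 t1.
Proof.
  intros t0 t1 Hc0 Hc1 Heq. exists XX. split.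
  2:{ simpl. split; [intros a b []|]. split; auto. split; auto.
      intros F0 F1 Hh. apply hat_empty in Hh as Hh'. subst F1.
      destruct (hat_eval _ _ _ Hh). destruct (hat_ctx_closed _ _ _ Hh). apply Heq; auto. }
  split; [|split; [|split]]; simpl.
  - split; [intros E [HE _]; auto|]. intros E a b (HE&Ha&Hb&_); auto.
  - intros E s0 s1 (HE&Hs0&Hs1&HF) _ E0 E1 HE0 HE1 Hh.
    destruct (hat_ctx_closed _ _ _ Hh).
    split; auto. split; [|split].
    + apply (plug_closed (CReset E0)); auto.
    + apply (plug_closed (CReset E1)); auto.
    + intros G0 G1 HG.
      replace (plug G0 (Reset (plug E0 s0))) with (plug (ccomp G0 (CReset E0)) s0)
        by (rewrite plug_ccomp; auto).
      replace (plug G1 (Reset (plug E1 s1))) with (plug (ccomp G1 (CReset E1)) s1)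
        by (rewrite plug_ccomp; auto).
      apply HF. apply hat_comp; auto. apply hat_reset; auto.
  - intros E p0 p1 HX Hp0 Hp1. pose proof HX as (HE&Hcp0&Hcp1&HF).
    split; [|split; [|split]].
    + intros p0' Hst Hp'. exists p1. split; [apply rt_refl|]. split; auto.
      split; auto. split; [eapply step_closed; eauto|]. split; auto.
      intros F0 F1 Hh. rewrite <- (HF F0 F1 Hh). symmetry. apply ev_step.
      apply (step_ctx _ _ (CReset F0)); auto. simpl. apply (hat_eval _ _ _ Hh).
    + intros v0 Hst Hv0.
      assert (Hev : evals_to_value (Reset p1)).
      { apply (HF Hole Hole (hat_hole E)). simpl. eapply prog_ev; eauto. }
      destruct (get_value p1 Hp1 Hev) as (v1&Hv1&Hs1).
      assert (closed v0) by (eapply step_closed; eauto).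
      assert (closed v1) by (eapply steps_closed; eauto).
      exists v1. split; auto. split; auto. split.
      * intros a b [[-> ->]|H']; auto.
      * eapply sound_add; eauto. apply rt_step; auto.
    + intros p1' Hst Hp'. exists p0. split; [apply rt_refl|]. split; auto.
      split; auto. split; auto. split; [eapply step_closed; eauto|].
      intros F0 F1 Hh. rewrite (HF F0 F1 Hh). apply ev_step.
      apply (step_ctx _ _ (CReset F1)); auto. simpl. apply (hat_eval _ _ _ Hh).
    + intros v1 Hst Hv1.
      assert (Hev : evals_to_value (Reset p0)).
      { apply (HF Hole Hole (hat_hole E)). simpl. eapply prog_ev; eauto. }
      destruct (get_value p0 Hp0 Hev) as (v0&Hv0&Hs0).
      assert (closed v1) by (eapply step_closed; eauto).
      assert (closed v0) by (eapply steps_closed; eauto).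
      exists v0. split; auto. split; auto. split.
      * intros a b [[-> ->]|H']; auto.
      * eapply sound_add; eauto. apply rt_step; auto.
  - intros E [HE HS] s0 s1 v0 v1 HEl Hv0 Hv1 Ht.
    destruct (HE _ _ HEl) as (_&_&Hl0&Hl1). destruct Ht as (Ho&Hcv0&Hcv1).
    split; auto. split; [|split].
    + apply subst_closed_at; auto.
    + apply subst_closed_at; auto.
    + intros F0 F1 Hh. destruct (hat_eval _ _ _ Hh).
      rewrite <- (beta_ev F0 s0 v0), <- (beta_ev F1 s1 v1); auto.
      apply HS. apply hat_plug; auto.
      split; [apply tl_app; [apply tl_base|]; auto|]. unfold closed in *; simpl; auto.
Qed.
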